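(* Let $S$ be a training set of examples $(\mathbf{x},y)$ with $\mathbf{x}\in[-1,1]^d$, $y\in\{1,\dots,k\}$, and let $\epsilon>0$, $c>0$, $r\in\mathbb{N}$. Assume there exists $W^\star\in\mathbb{R}^{k\times d}$ with $L(W^\star)\le\epsilon$, all entries of $W^\star$ in $[-c,c]$, and $\|W^\star\|_{\infty,0}=r$. Then ShareBoost, run for $T=\lceil 4r^2c^2/\epsilon\rceil$ iterations, outputs a matrix $W$ with $L(W)\le 2\epsilon$ and $\|W\|_{\infty,0}\le \lceil 4r^2c^2/\epsilon\rceil$.
   Context: For $W\in\mathbb{R}^{k\times d}$, $W_{\cdot,i}$ denotes its $i$-th column and $\|W\|_{\infty,0}=|\{i:\|W_{\cdot,i}\|_\infty>0\}|$. The loss of $W$ on $(\mathbf{x},y)$ is $\ell(W,(\mathbf{x},y))=\ln\sum_{y'\in\{1,\dots,k\}}\exp\big(\mathbf{1}[y'\neq y]-(W\mathbf{x})_y+(W\mathbf{x})_{y'}\big)$, and $L(W)=\frac1{|S|}\sum_{(\mathbf{x},y)\in S}\ell(W,(\mathbf{x},y))$. Write $\nabla_r L(W)\in\mathbb{R}^k$ for the $r$-th column of $\nabla L(W)$. The ShareBoost algorithm: initialize $W=0$, $I=\emptyset$; for $t=1,\dots,T$: choose $r\in\{1,\dots,d\}$ maximizing $\|\nabla_r L(W)\|_1$ (ties broken arbitrarily), set $I\leftarrow I\cup\{r\}$, and set $W\leftarrow\arg\min\{L(V): V_{\cdot,i}=0\text{ for all }i\notin I\}$ (a minimizer is assumed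 to be attained at every iteration). *)

(* Defs.v *)
From Stdlib Require Import Reals List Arith Bool ZArith.
Import ListNotations.
Open Scope R_scope.

(* A k x d real matrix is a function row -> column -> R; only entries with
   row < k and column < d are meaningful.  Indices are 0-based:
   rows (labels) 0..k-1, columns (features) 0..d-1. *)
Definition mat := nat -> nat -> R.
Definition vec := nat -> R.
Definition example := (vec * nat)%type.

Definition sumR (n : nat) (f : nat -> R) : R :=
  fold_right Rplus 0 (map f (seq 0 n)).

Definition matvec (d : nat) (W : mat) (x : vec) (j : nat) : R :=
  sumR d (fun i => W j i * x i).

Definition indic_neq (a b : nat) : R := if Nat.eqb a b then 0 else 1.

Definition loss (k d : nat) (W : mat) (e : example) : R :=
  let (x, y) := e in
  ln (sumR k (fun y' =>
        exp (indic_neq y' y - matvec d W x y + matvec d W x y'))).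

Definition Lrisk (k d : nat) (S : list example) (W : mat) : R :=
  / INR (length S) * fold_right Rplus 0 (map (loss k d W) S).

Definition col_nonzero (k : nat) (W : mat) (i : nat) : bool :=
  existsb (fun j => if Req_EM_T (W j i) 0 then false else true) (seq 0 k).

Definition norm_inf0 (k d : nat) (W : mat) : nat :=
  length (filter (col_nonzero k W) (seq 0 d)).

Definition perturb (W : mat) (j i : nat) (t : R) : mat :=
  fun a b => W a b + (if Nat.eqb a j && Nat.eqb b i then t else 0).

Definition is_gradient (k d : nat) (F : mat -> R) (W : mat) (G : mat) : Prop :=
  forall j i, (j < k)%nat -> (i < d)%nat ->
    derivable_pt_lim (fun t => F (perturb W j i t)) 0 (G j i).

Definition col_l1 (k : nat) (G : mat) (r : nat) : R :=
  sumR k (fun j => Rabs (G j r)).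

Definition in_I (rs : nat -> nat) (t i : nat) : Prop :=
  exists s, (1 <= s)%nat /\ (s <= t)%nat /\ rs s = i.

Definition supported_on (rs : nat -> nat) (t : nat) (V : mat) : Prop :=
  forall j i, ~ in_I rs t i -> V j i = 0.

(* A run of ShareBoost for T iterations: Ws t is W after iteration t
   (Ws 0 = 0), rs t is the column chosen at iteration t (ties arbitrary,
   any minimizer allowed). *)
Definition shareboost_run (k d : nat) (S : list example) (T : nat)
    (Ws : nat -> mat) (rs : nat -> nat) : Prop :=
  (forall j i, Ws 0%nat j i = 0) /\
  forall t, (1 <= t)%nat -> (t <= T)%nat ->
    (rs t < d)%nat /\
    (exists G, is_gradient k d (Lrisk k d S) (Ws (t - 1)%nat) G /\
       forall r', (r' < d)%nat -> col_l1 k G r' <= col_l1 k G (rs t)) /\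
    supported_on rs t (Ws t) /\
    (forall V, supported_on rs t V -> Lrisk k d S (Ws t) <= Lrisk k d S V).

(* ceiling of a real, as a natural number (for nonnegative arguments) *)
Definition ceil_nat (x : R) : nat := Z.to_nat (- Int_part (- x)).

(* Main.v *)
Require Import Defs.
From Stdlib Require Import Reals List Arith ZArith Lra Lia Psatz FunctionalExtensionality Classical.
From Coquelicot Require Import Coquelicot.
Open Scope R_scope.

Lemma chord_exp z : 0 <= z <= 1 -> exp z <= 1 + (exp 1 - 1) * z.
Proof.
  intros [H0 H1].
  destruct (Req_dec z 0) as [->|Hz0]. { rewrite exp_0. lra. }
  destruct (Req_dec z 1) as [->|Hz1]. { lra. }
  set (q := fun x => exp x - 1 - (exp 1 - 1) * x).
  assert (Hd : forall c, derivable_pt_lim q c (exp c - (exp 1 - 1))).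
  { intros c. apply is_derive_Reals. unfold q. auto_derive. auto. ring. }
  destruct (MVT_cor2 q (fun c => exp c - (exp 1 - 1)) 0 z) as [c1 [E1 [Hc1 Hc1']]].
  lra. intros; apply Hd.
  destruct (MVT_cor2 q (fun c => exp c - (exp 1 - 1)) z 1) as [c2 [E2 [Hc2 Hc2']]].
  lra. intros; apply Hd.
  assert (exp c1 < exp c2) by (apply exp_increasing; lra).
  unfold q in E1, E2. rewrite exp_0 in E1.
  set (qz := exp z - 1 - (exp 1 - 1) * z) in *.
  assert (HA : qz = (exp c1 - (exp 1 - 1)) * z) by lra.
  assert (HB : - qz = (exp c2 - (exp 1 - 1)) * (1 - z)) by lra.
  assert (Hzz : 0 < z * (1 - z)) by nra.
  assert (qz * (1 - z) <= - qz * z).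
  { replace (qz * (1 - z)) with ((exp c1 - (exp 1 - 1)) * z * (1 - z)) by (rewrite HA; ring).
    replace (- qz * z) with ((exp c2 - (exp 1 - 1)) * (1 - z) * z) by (rewrite <- HB; ring).
    assert (0 <= (exp c2 - exp c1) * (z * (1 - z))) by nra. nra. }
  unfold qz in *. nra.
Qed.

Lemma exp_quad z : -1 <= z <= 1 -> exp z <= 1 + z + z^2.
Proof.
  intros [H0 H1].
  destruct (Rle_dec z 0) as [Hn|Hp].
  - assert (E : exp z * exp (-z) = 1) by (rewrite <- exp_plus; replace (z + - z) with 0 by ring; apply exp_0).
    pose proof (exp_ineq1_le (-z)). pose proof (exp_pos z).
    assert (exp z * (1 - z) <= 1) by nra.
    assert (0 <= - z^3) by nra.
    assert ((exp z - (1 + z + z^2)) * (1 - z) <= 0) by nra.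
    nra.
  - set (g := fun x => 1 + x + x^2 - exp x).
    assert (Hd : forall c, derivable_pt_lim g c (1 + 2*c - exp c)).
    { intros c. apply is_derive_Reals. unfold g. auto_derive. auto. ring. }
    destruct (MVT_cor2 g (fun c => 1 + 2*c - exp c) 0 z) as [c1 [E1 [Hc1 Hc1']]].
    lra. intros; apply Hd.
    pose proof (chord_exp c1 ltac:(lra)). pose proof exp_le_3.
    unfold g in E1. rewrite exp_0 in E1.
    assert (0 <= 1 + 2 * c1 - exp c1) by nra.
    assert (0 <= (1 + 2 * c1 - exp c1) * (z - 0)) by (apply Rmult_le_pos; lra).
    lra.
Qed.

Lemma ln_le_xm1 x : 0 < x -> ln x <= x - 1.
Proof. intros H. pose proof (exp_ineq1_le (ln x)). rewrite exp_ln in H0; lra. Qed.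

Lemma ln_le_mono x y : 0 < x -> x <= y -> ln x <= ln y.
Proof. intros H H'. destruct (Req_dec x y) as [->|]; [lra|]. left; apply ln_increasing; lra. Qed.

Definition sumL {A} (l : list A) (f : A -> R) : R := fold_right Rplus 0 (map f l).

Lemma sumR_sumL n f : sumR n f = sumL (seq 0 n) f.
Proof. reflexivity. Qed.

Section Sums.
Context {A : Type}.
Lemma sumL_nil (f : A -> R) : sumL nil f = 0. Proof. reflexivity. Qed.
Lemma sumL_cons x l (f : A -> R) : sumL (x :: l) f = f x + sumL l f. Proof. reflexivity. Qed.

Lemma sumL_ext (l : list A) f g : (forall x, In x l -> f x = g x) -> sumL l f = sumL l g.
Proof. induction l; intros H; auto. rewrite !sumL_cons. f_equal; [apply H; left; auto | apply IHl; intros; apply H; right; auto]. Qed.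

Lemma sumL_plus (l : list A) f g : sumL l (fun x => f x + g x) = sumL l f + sumL l g.
Proof. induction l; simpl. unfold sumL; simpl; ring. rewrite !sumL_cons, IHl; ring. Qed.

Lemma sumL_scal (l : list A) c f : sumL l (fun x => c * f x) = c * sumL l f.
Proof. induction l; simpl. unfold sumL; simpl; ring. rewrite !sumL_cons, IHl; ring. Qed.

Lemma sumL_le (l : list A) f g : (forall x, In x l -> f x <= g x) -> sumL l f <= sumL l g.
Proof. induction l; intros H. unfold sumL; simpl; lra. rewrite !sumL_cons.
  pose proof (H a (or_introl eq_refl)). assert (sumL l f <= sumL l g) by (apply IHl; intros; apply H; simpl; auto). lra. Qed.

Lemma sumL_abs (l : list A) f : Rabs (sumL l f) <= sumL l (fun x => Rabs (f x)).
Proof. induction l. unfold sumL; simpl; rewrite Rabs_R0; lra. rewrite !sumL_cons.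
  eapply Rle_trans; [apply Rabs_triang|]. lra. Qed.

Lemma sumL_pos (l : list A) f : l <> nil -> (forall x, In x l -> 0 < f x) -> 0 < sumL l f.
Proof. induction l; intros Hn H. congruence. rewrite sumL_cons.
  pose proof (H a (or_introl eq_refl)). destruct l. unfold sumL; simpl; lra.
  assert (0 < sumL (a0::l) f) by (apply IHl; [congruence| intros; apply H; simpl; auto]). lra. Qed.

Lemma sumL_nonneg (l : list A) f : (forall x, In x l -> 0 <= f x) -> 0 <= sumL l f.
Proof. intros H. replace 0 with (sumL l (fun _ => 0)). apply sumL_le; auto.
  induction l; auto. rewrite sumL_cons, IHl. ring. intros; apply H; simpl; auto. Qed.

Lemma sumL_zero (l : list A) f : (forall x, In x l -> f x = 0) -> sumL l f = 0.
Proof. intros H. induction l; auto. rewrite sumL_cons, H, IHl. ring. intros; apply H; right; auto. left; auto. Qed.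

Lemma sumL_const (l : list A) a : sumL l (fun _ => a) = a * INR (length l).
Proof. induction l. unfold sumL; simpl; ring. rewrite sumL_cons, IHl. simpl length. rewrite S_INR. ring. Qed.

Lemma sumL_count (l : list A) (b : A -> bool) a :
  sumL l (fun x => if b x then a else 0) = a * INR (length (filter b l)).
Proof. induction l. unfold sumL; simpl; ring. rewrite sumL_cons, IHl. simpl.
  destruct (b a0); simpl length; try rewrite S_INR; ring. Qed.
End Sums.

Lemma sumL_single (l : list nat) f c : NoDup l -> In c l -> (forall x, In x l -> x <> c -> f x = 0) -> sumL l f = f c.
Proof.
  induction l; intros Hnd Hin H. destruct Hin.
  inversion Hnd; subst. rewrite sumL_cons. destruct Hin as [->|Hin].
  - rewrite sumL_zero. ring. intros x Hx. apply H. simpl; auto. intros ->. contradiction.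
  - rewrite IHl; auto. rewrite H. ring. simpl; auto. intros ->; contradiction.
    intros; apply H; simpl; auto.
Qed.

Lemma dpl_ext f g x l : (forall y, f y = g y) -> derivable_pt_lim f x l -> derivable_pt_lim g x l.
Proof. intros H. replace g with f; auto. apply functional_extensionality; auto. Qed.

Section LSE.
Variable l : list nat.
Hypothesis Hl : l <> nil.
Variables a b : nat -> R.

Let Zs s := sumL l (fun y => exp (a y + s * b y)).
Let Z0 := sumL l (fun y => exp (a y)).
Let N := sumL l (fun y => exp (a y) * b y).

Lemma Z0_pos : 0 < Z0.
Proof. apply sumL_pos; auto. intros; apply exp_pos. Qed.

Lemma Zs_pos s : 0 < Zs s.
Proof. apply sumL_pos; auto. intros; apply exp_pos. Qed.

Lemma Zs_deriv_gen (l' : list nat) x :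
  derivable_pt_lim (fun s => sumL l' (fun y => exp (a y + s * b y))) x
    (sumL l' (fun y => exp (a y + x * b y) * b y)).
Proof.
  induction l'.
  - apply (dpl_ext (fct_cte 0)). intros; reflexivity. apply derivable_pt_lim_const.
  - apply (dpl_ext ((fun s => exp (a a0 + s * b a0)) + (fun s => sumL l' (fun y => exp (a y + s * b y))))%F).
    intros y. reflexivity.
    rewrite sumL_cons. apply derivable_pt_lim_plus; auto.
    apply is_derive_Reals. auto_derive. auto. ring.
Qed.

Lemma lse_deriv : derivable_pt_lim (fun s => ln (Zs s)) 0 (N / Z0).
Proof.
  pose proof Z0_pos.
  assert (HZ : Zs 0 = Z0).
  { unfold Zs, Z0. apply sumL_ext. intros. f_equal. ring. }
  assert (HN : sumL l (fun y => exp (a y + 0 * b y) * b y) = N).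
  { unfold N. apply sumL_ext. intros. f_equal. f_equal. ring. }
  pose proof (derivable_pt_lim_comp Zs ln 0 _ _ (Zs_deriv_gen l 0)
                (derivable_pt_lim_ln (Zs 0) (Zs_pos 0))) as D.
  rewrite HZ, HN in D. unfold Rdiv. rewrite Rmult_comm. exact D.
Qed.

Lemma lse_convex : ln Z0 + N / Z0 <= ln (Zs 1).
Proof.
  pose proof Z0_pos. set (m := N / Z0).
  assert (Hle : exp m * Z0 <= Zs 1).
  { unfold Zs.
    assert (E : exp m * Z0 = sumL l (fun y => exp m * (exp (a y) * (1 + (b y - m))))).
    { rewrite sumL_scal. f_equal.
      transitivity (sumL l (fun y => exp (a y) + (exp (a y) * b y + (- m) * exp (a y)))).
      2:{ apply sumL_ext; intros; ring. }
      rewrite sumL_plus, sumL_plus, sumL_scal. fold Z0 N. unfold m. field. lra. }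
    rewrite E. apply sumL_le. intros y _.
    replace (exp (a y + 1 * b y)) with (exp m * (exp (a y) * exp (b y - m))).
    2:{ rewrite <- !exp_plus. f_equal. ring. }
    pose proof (exp_ineq1_le (b y - m)). pose proof (exp_pos m). pose proof (exp_pos (a y)).
    apply Rmult_le_compat_l; [lra|]. apply Rmult_le_compat_l; lra. }
  pose proof (ln_le_mono _ _ (Rmult_lt_0_compat _ _ (exp_pos m) H) Hle).
  rewrite ln_mult, ln_exp in H0; auto. lra. apply exp_pos.
Qed.

Lemma lse_smooth beta s : (forall y, In y l -> Rabs (b y - beta) <= 1) -> 0 <= s <= 1 ->
  ln (Zs s) <= ln Z0 + s * (N / Z0) + s ^ 2.
Proof.
  intros Hb Hs. pose proof Z0_pos. set (m := N / Z0).
  set (Q := 1 + s * (m - beta) + s ^ 2).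
  assert (Hle : Zs s <= exp (s * beta) * (Z0 * Q)).
  { unfold Zs.
    assert (E : exp (s * beta) * (Z0 * Q) =
       sumL l (fun y => exp (s * beta) * (exp (a y) * (1 + s * (b y - beta) + s ^ 2)))).
    { rewrite sumL_scal. f_equal.
      transitivity (sumL l (fun y => (1 - s * beta + s^2) * exp (a y) + s * (exp (a y) * b y))).
      2:{ apply sumL_ext; intros; ring. }
      rewrite sumL_plus, !sumL_scal. fold Z0 N. unfold Q, m. field. lra. }
    rewrite E. apply sumL_le. intros y Hy.
    replace (exp (a y + s * b y)) with (exp (s * beta) * (exp (a y) * exp (s * (b y - beta)))).
    2:{ rewrite <- !exp_plus. f_equal. ring. }
    specialize (Hb y Hy). apply Rabs_le_between in Hb.
    assert (Hz : -1 <= s * (b y - beta) <= 1) by (split; nra).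
    pose proof (exp_quad _ Hz).
    assert ((s * (b y - beta)) ^ 2 <= s ^ 2).
    { assert ((b y - beta)^2 <= 1) by nra. replace ((s * (b y - beta)) ^ 2) with (s^2 * (b y - beta)^2) by ring.
      assert (0 <= s^2) by nra. nra. }
    pose proof (exp_pos (s * beta)). pose proof (exp_pos (a y)).
    apply Rmult_le_compat_l; [lra|]. apply Rmult_le_compat_l; lra. }
  assert (HQ : 0 < Q).
  { pose proof (Zs_pos s). pose proof (exp_pos (s * beta)).
    destruct (Rlt_dec 0 Q); auto. exfalso.
    assert (Z0 * Q <= 0) by nra. nra. }
  pose proof (ln_le_mono _ _ (Zs_pos s) Hle).
  rewrite ln_mult, ln_exp, ln_mult in H0; auto.
  pose proof (ln_le_xm1 Q HQ). unfold Q in *. lra.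
  apply exp_pos. nra.
Qed.

Lemma lse_dbound B : (forall y, In y l -> Rabs (b y) <= B) -> Rabs (N / Z0) <= B.
Proof.
  intros Hb. pose proof Z0_pos. unfold Rdiv. rewrite Rabs_mult, Rabs_inv, (Rabs_right Z0) by lra.
  apply (Rmult_le_reg_r Z0); auto. rewrite Rmult_assoc, Rinv_l by lra. rewrite Rmult_1_r.
  unfold N, Z0. eapply Rle_trans. apply sumL_abs. rewrite <- sumL_scal. apply sumL_le.
  intros y Hy. rewrite Rabs_mult, Rabs_right by (left; apply exp_pos).
  pose proof (exp_pos (a y)). specialize (Hb y Hy). nra.
Qed.
End LSE.

Definition zz (d : nat) (W : mat) (e : example) (y' : nat) : R :=
  indic_neq y' (snd e) - matvec d W (fst e) (snd e) + matvec d W (fst e) y'.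
Definition bv (d : nat) (D : mat) (e : example) (y' : nat) : R :=
  matvec d D (fst e) y' - matvec d D (fst e) (snd e).
Definition mplus (W D : mat) (s : R) : mat := fun a b => W a b + s * D a b.
Definition Zk k d W e := sumL (seq 0 k) (fun y => exp (zz d W e y)).
Definition dirE k d W D e := sumL (seq 0 k) (fun y => exp (zz d W e y) * bv d D e y) / Zk k d W e.
Definition dir k d S W D := / INR (length S) * sumL S (dirE k d W D).

Lemma inv_nonneg n : 0 <= / INR n.
Proof. destruct n. simpl. rewrite Rinv_0. lra. left. apply Rinv_0_lt_compat, lt_0_INR. lia. Qed.

Lemma inv_mul_le n : / INR n * INR n <= 1.
Proof. destruct n. simpl. rewrite Rinv_0. lra. rewrite Rinv_l. lra. apply not_0_INR. lia. Qed.

Lemma matvec_lin d u v D1 D2 x j :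
  matvec d (fun a b => u * D1 a b + v * D2 a b) x j = u * matvec d D1 x j + v * matvec d D2 x j.
Proof. unfold matvec. rewrite !sumR_sumL. rewrite <- !sumL_scal, <- sumL_plus. apply sumL_ext. intros; ring. Qed.

Lemma matvec_mplus d W D s x j : matvec d (mplus W D s) x j = matvec d W x j + s * matvec d D x j.
Proof. unfold matvec, mplus. rewrite !sumR_sumL. rewrite <- !sumL_scal, <- sumL_plus. apply sumL_ext. intros; ring. Qed.

Lemma loss_def k d W e : loss k d W e = ln (Zk k d W e).
Proof. destruct e. reflexivity. Qed.

Lemma loss_line k d W D s e :
  loss k d (mplus W D s) e = ln (sumL (seq 0 k) (fun y => exp (zz d W e y + s * bv d D e y))).
Proof. destruct e as [x y]. unfold loss. rewrite sumR_sumL. f_equal. apply sumL_ext. intros.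
  f_equal. unfold zz, bv. simpl. rewrite !matvec_mplus. ring. Qed.

Lemma Lrisk_def k d S W : Lrisk k d S W = / INR (length S) * sumL S (loss k d W).
Proof. reflexivity. Qed.

Lemma mplus0 W D : mplus W D 0 = W.
Proof. apply functional_extensionality; intro a; apply functional_extensionality; intro b. unfold mplus; ring. Qed.

Lemma seq_nonnil k : (0 < k)%nat -> seq 0 k <> nil.
Proof. destruct k; simpl; [lia|congruence]. Qed.

Section Risk.
Variables (k d : nat) (S : list example).
Hypothesis Hk : (0 < k)%nat.

Lemma Lrisk_deriv W D : derivable_pt_lim (fun s => Lrisk k d S (mplus W D s)) 0 (dir k d S W D).
Proof.
  assert (G : forall S', derivable_pt_lim (fun s => sumL S' (fun e => loss k d (mplus W D s) e)) 0
                (sumL S' (dirE k d W D))).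
  { induction S'.
    - apply (dpl_ext (fct_cte 0)). intros; reflexivity. apply derivable_pt_lim_const.
    - apply (dpl_ext ((fun s => loss k d (mplus W D s) a) + (fun s => sumL S' (fun e => loss k d (mplus W D s) e)))%F).
      intros y. reflexivity.
      rewrite sumL_cons. apply derivable_pt_lim_plus; auto.
      eapply dpl_ext. intros s. symmetry. apply loss_line.
      apply (lse_deriv (seq 0 k) (seq_nonnil k Hk)). }
  unfold dir. apply (dpl_ext (mult_real_fct (/ INR (length S)) (fun s => sumL S (fun e => loss k d (mplus W D s) e)))).
  intros; reflexivity. apply derivable_pt_lim_scal. apply G.
Qed.

Lemma Lrisk_convex W D : Lrisk k d S W + dir k d S W D <= Lrisk k d S (mplus W D 1).
Proof.
  rewrite !Lrisk_def. unfold dir. rewrite <- Rmult_plus_distr_l. apply Rmult_le_compat_l. apply inv_nonneg.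
  rewrite <- sumL_plus. apply sumL_le. intros e _. rewrite loss_line, loss_def.
  apply (lse_convex (seq 0 k) (seq_nonnil k Hk)).
Qed.

Lemma Lrisk_smooth W D s :
  (forall e, In e S -> exists beta, forall y, In y (seq 0 k) -> Rabs (bv d D e y - beta) <= 1) ->
  0 <= s <= 1 ->
  Lrisk k d S (mplus W D s) <= Lrisk k d S W + s * dir k d S W D + s ^ 2.
Proof.
  intros Hb Hs. rewrite !Lrisk_def. unfold dir.
  assert (H : sumL S (loss k d (mplus W D s)) <=
              sumL S (loss k d W) + s * sumL S (dirE k d W D) + s^2 * INR (length S)).
  { rewrite <- sumL_const, <- sumL_scal, <- !sumL_plus. apply sumL_le. intros e He.
    rewrite loss_line, loss_def. destruct (Hb e He) as [beta Hbeta].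
    apply (lse_smooth (seq 0 k) (seq_nonnil k Hk) _ _ beta s Hbeta Hs). }
  pose proof (inv_nonneg (length S)). pose proof (inv_mul_le (length S)).
  assert (0 <= s^2) by nra.
  apply Rmult_le_compat_l with (r := / INR (length S)) in H; auto.
  nra.
Qed.

Lemma dir_bound W D B : (forall e, In e S -> forall y, In y (seq 0 k) -> Rabs (bv d D e y) <= B) ->
  0 <= B -> Rabs (dir k d S W D) <= B.
Proof.
  intros Hb HB. unfold dir. rewrite Rabs_mult, (Rabs_right (/ _)) by (apply Rle_ge, inv_nonneg).
  eapply Rle_trans. apply Rmult_le_compat_l. apply inv_nonneg. apply sumL_abs.
  eapply Rle_trans. apply Rmult_le_compat_l. apply inv_nonneg.
  apply (sumL_le _ _ (fun _ => B)). intros e He. apply (lse_dbound (seq 0 k) (seq_nonnil k Hk)). auto.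
  rewrite sumL_const. pose proof (inv_mul_le (length S)). pose proof (inv_nonneg (length S)). nra.
Qed.
End Risk.

Definition madd (D1 D2 : mat) : mat := fun a b => D1 a b + D2 a b.
Definition mscal (u : R) (D : mat) : mat := fun a b => u * D a b.
Definition msum (l : list nat) (F : nat -> mat) : mat := fun a b => sumL l (fun x => F x a b).
Definition Emat (j i : nat) : mat := fun a b => if andb (Nat.eqb a j) (Nat.eqb b i) then 1 else 0.

Lemma matvec_add d D1 D2 x j : matvec d (madd D1 D2) x j = matvec d D1 x j + matvec d D2 x j.
Proof. unfold matvec, madd. rewrite !sumR_sumL, <- sumL_plus. apply sumL_ext. intros; ring. Qed.
Lemma matvec_scal d u D x j : matvec d (mscal u D) x j = u * matvec d D x j.
Proof. unfold matvec, mscal. rewrite !sumR_sumL, <- sumL_scal. apply sumL_ext. intros; ring. Qed.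

Lemma dirE_add k d W D1 D2 e : dirE k d W (madd D1 D2) e = dirE k d W D1 e + dirE k d W D2 e.
Proof. unfold dirE, Rdiv. rewrite <- Rmult_plus_distr_r, <- sumL_plus. f_equal. apply sumL_ext. intros.
  unfold bv. rewrite !matvec_add. ring. Qed.
Lemma dirE_scal k d W u D e : dirE k d W (mscal u D) e = u * dirE k d W D e.
Proof. unfold dirE, Rdiv. rewrite <- Rmult_assoc, <- sumL_scal. f_equal. apply sumL_ext. intros.
  unfold bv. rewrite !matvec_scal. ring. Qed.

Lemma dir_add k d S W D1 D2 : dir k d S W (madd D1 D2) = dir k d S W D1 + dir k d S W D2.
Proof. unfold dir. rewrite <- Rmult_plus_distr_l, <- sumL_plus. f_equal. apply sumL_ext. intros; apply dirE_add. Qed.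
Lemma dir_scal k d S W u D : dir k d S W (mscal u D) = u * dir k d S W D.
Proof. unfold dir. replace (sumL S (dirE k d W (mscal u D))) with (sumL S (fun e => u * dirE k d W D e)).
  rewrite sumL_scal; ring. apply sumL_ext; intros; symmetry; apply dirE_scal. Qed.
Lemma dir_zero k d S W : dir k d S W (fun _ _ => 0) = 0.
Proof. unfold dir. rewrite sumL_zero. ring. intros e _. unfold dirE. rewrite sumL_zero. unfold Rdiv; ring.
  intros y _. unfold bv, matvec. rewrite !sumR_sumL, !sumL_zero; try (intros; ring). Qed.

Lemma dir_msum k d S W (l : list nat) F : dir k d S W (msum l F) = sumL l (fun x => dir k d S W (F x)).
Proof. induction l.
  - replace (msum nil F) with (fun _ _ : nat => 0). apply dir_zero. reflexivity.
  - replace (msum (a :: l) F) with (madd (F a) (msum l F)). rewrite dir_add, IHl, sumL_cons. reflexivity.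
    reflexivity.
Qed.

Section Block.
Variables (k d : nat) (S : list example).
Hypothesis Hk : (0 < k)%nat.
Hypothesis HS : forall e, In e S -> (snd e < k)%nat /\ forall i, (i < d)%nat -> -1 <= fst e i <= 1.

Lemma matvec_block D1 D2 x y : (forall b, (b < d)%nat -> D1 y b = D2 y b) -> matvec d D1 x y = matvec d D2 x y.
Proof. intros H. unfold matvec. rewrite !sumR_sumL. apply sumL_ext. intros i Hi. apply in_seq in Hi. rewrite H; auto. lia. Qed.

Lemma dir_block W D1 D2 : (forall a b, (a < k)%nat -> (b < d)%nat -> D1 a b = D2 a b) ->
  dir k d S W D1 = dir k d S W D2.
Proof.
  intros H. unfold dir. f_equal. apply sumL_ext. intros e He. unfold dirE. f_equal. apply sumL_ext.
  intros y Hy. apply in_seq in Hy. destruct (HS e He) as [Hy' _]. unfold bv.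
  rewrite (matvec_block D1 D2 _ y), (matvec_block D1 D2 _ (snd e)); auto; intros; apply H; lia.
Qed.

Lemma dir_decomp W D : dir k d S W D =
  sumL (seq 0 d) (fun i => sumL (seq 0 k) (fun j => D j i * dir k d S W (Emat j i))).
Proof.
  rewrite (dir_block W D (msum (seq 0 d) (fun i => msum (seq 0 k) (fun j => mscal (D j i) (Emat j i))))).
  - rewrite dir_msum. apply sumL_ext. intros i _. rewrite dir_msum. apply sumL_ext. intros j _. apply dir_scal.
  - intros a b Ha Hb. unfold msum, mscal, Emat.
    rewrite (sumL_single (seq 0 d) _ b). rewrite (sumL_single (seq 0 k) _ a).
    rewrite !Nat.eqb_refl. simpl. ring.
    apply seq_NoDup. apply in_seq; lia.
    intros x _ Hx. assert (E : Nat.eqb a x = false) by (apply Nat.eqb_neq; auto). rewrite E. simpl. ring.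
    apply seq_NoDup. apply in_seq; lia.
    intros x _ Hx. apply sumL_zero. intros j _. assert (E : Nat.eqb b x = false) by (apply Nat.eqb_neq; auto). rewrite E.
    rewrite Bool.andb_false_r. ring.
Qed.

Lemma perturb_mplus W j i t : perturb W j i t = mplus W (Emat j i) t.
Proof. apply functional_extensionality; intro a; apply functional_extensionality; intro b.
  unfold perturb, mplus, Emat. destruct (andb (Nat.eqb a j) (Nat.eqb b i)); ring. Qed.

Lemma grad_id W G : is_gradient k d (Lrisk k d S) W G -> forall j i, (j < k)%nat -> (i < d)%nat ->
  G j i = dir k d S W (Emat j i).
Proof.
  intros HG j i Hj Hi. specialize (HG j i Hj Hi).
  apply (uniqueness_limite (fun s => Lrisk k d S (mplus W (Emat j i) s)) 0).
  eapply dpl_ext; [|exact HG]. intros; simpl. rewrite perturb_mplus. reflexivity.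
  apply Lrisk_deriv; auto.
Qed.

Lemma col_matvec D col x a : (col < d)%nat -> (forall a b, b <> col -> D a b = 0) ->
  matvec d D x a = D a col * x col.
Proof. intros Hc HD. unfold matvec. rewrite sumR_sumL. rewrite (sumL_single _ _ col). reflexivity.
  apply seq_NoDup. apply in_seq; lia. intros b _ Hb. rewrite HD; auto. ring. Qed.

Lemma col_bv D col : (col < d)%nat -> (forall a b, b <> col -> D a b = 0) ->
  (forall a, (a < k)%nat -> Rabs (D a col) <= 1) ->
  forall e, In e S ->
    (exists beta, forall y, In y (seq 0 k) -> Rabs (bv d D e y - beta) <= 1) /\
    (forall y, In y (seq 0 k) -> Rabs (bv d D e y) <= 2).
Proof.
  intros Hc HD Hb e He. destruct (HS e He) as [Hy Hx]. specialize (Hx col Hc).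
  assert (Hp : forall a, (a < k)%nat -> Rabs (D a col * fst e col) <= 1).
  { intros a Ha. rewrite Rabs_mult. specialize (Hb a Ha). assert (Rabs (fst e col) <= 1) by (apply Rabs_le; lra).
    pose proof (Rabs_pos (D a col)). pose proof (Rabs_pos (fst e col)). nra. }
  unfold bv. split.
  - exists (- (D (snd e) col * fst e col)). intros y Hy'. apply in_seq in Hy'.
    rewrite !(col_matvec D col); auto. replace (D y col * fst e col - D (snd e) col * fst e col - - (D (snd e) col * fst e col))
      with (D y col * fst e col) by ring. apply Hp; lia.
  - intros y Hy'. apply in_seq in Hy'. rewrite !(col_matvec D col); auto.
    pose proof (Hp y ltac:(lia)) as H1. pose proof (Hp (snd e) Hy) as H2.
    apply Rabs_le_between in H1. apply Rabs_le_between in H2. apply Rabs_le. lra.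
Qed.
End Block.

Lemma nonneg_small g : (forall s, 0 < s <= 1 -> 0 <= s * g + s ^ 2) -> 0 <= g.
Proof.
  intros H. destruct (Rle_dec 0 g); auto. exfalso.
  set (s := Rmin 1 (- g / 2)).
  assert (0 < s <= 1). { unfold s. split. apply Rmin_pos; lra. apply Rmin_l. }
  assert (s <= - g / 2) by apply Rmin_r.
  specialize (H s H0). nra.
Qed.

Lemma in_I_mono rs t i : in_I rs t i -> in_I rs (S t) i.
Proof. intros [s [H1 [H2 H3]]]. exists s; repeat split; auto; lia. Qed.
Lemma in_I_last rs t : in_I rs (S t) (rs (S t)).
Proof. exists (S t); repeat split; lia. Qed.
Lemma in_I_0 rs i : ~ in_I rs 0 i.
Proof. intros [s [H1 [H2 H3]]]. lia. Qed.

Lemma supp_mplus rs t W D s : supported_on rs t W -> (forall a b, ~ in_I rs t b -> D a b = 0) ->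
  supported_on rs t (mplus W D s).
Proof. intros HW HD a b Hb. unfold mplus. rewrite HW, HD; auto. ring. Qed.

Lemma filter_len0 {A} (f : A -> bool) l : length (filter f l) = 0%nat -> forall x, In x l -> f x = false.
Proof. intros H x Hx. destruct (f x) eqn:E; auto. exfalso.
  assert (In x (filter f l)) by (apply filter_In; auto). destruct (filter f l); simpl in *; [auto|lia]. Qed.

Lemma col_zero k W i : col_nonzero k W i = false -> forall j, (j < k)%nat -> W j i = 0.
Proof.
  intros H j Hj. destruct (Req_EM_T (W j i) 0) as [E|E]; auto. exfalso.
  assert (existsb (fun j => if Req_EM_T (W j i) 0 then false else true) (seq 0 k) = true).
  { apply existsb_exists. exists j. split. apply in_seq; lia. destruct (Req_EM_T (W j i) 0); auto; contradiction. }
  unfold col_nonzero in H. congruence.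
Qed.

Section Main.
Variables (k d : nat) (S : list example).
Hypothesis Hk : (0 < k)%nat.
Hypothesis HS : forall e, In e S -> (snd e < k)%nat /\ forall i, (i < d)%nat -> -1 <= fst e i <= 1.

Lemma Lrisk_block W1 W2 : (forall a b, (a < k)%nat -> (b < d)%nat -> W1 a b = W2 a b) ->
  Lrisk k d S W1 = Lrisk k d S W2.
Proof.
  intros H. rewrite !Lrisk_def. f_equal. apply sumL_ext. intros e He. rewrite !loss_def. unfold Zk. f_equal.
  apply sumL_ext. intros y Hy. apply in_seq in Hy. destruct (HS e He) as [Hy' _]. unfold zz.
  rewrite (matvec_block k d Hk W1 W2 _ y), (matvec_block k d Hk W1 W2 _ (snd e)); auto; intros; apply H; lia.
Qed.

Lemma grad_zero W G rs t : is_gradient k d (Lrisk k d S) W G -> supported_on rs t W ->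
  (forall V, supported_on rs t V -> Lrisk k d S W <= Lrisk k d S V) ->
  forall j i, (j < k)%nat -> (i < d)%nat -> in_I rs t i -> G j i = 0.
Proof.
  intros HG Hsup Hmin j i Hj Hi HI.
  rewrite (grad_id k d S Hk W G HG j i Hj Hi).
  assert (Hgen : forall u, Rabs u <= 1 -> 0 <= u * dir k d S W (Emat j i)).
  { intros u Hu. rewrite <- dir_scal.
    apply nonneg_small. intros s Hs.
    assert (Hcol : forall a b, b <> i -> mscal u (Emat j i) a b = 0).
    { intros a b Hb. unfold mscal, Emat. assert (E : Nat.eqb b i = false) by (apply Nat.eqb_neq; auto).
      rewrite E, Bool.andb_false_r. ring. }
    assert (Hb1 : forall a, (a < k)%nat -> Rabs (mscal u (Emat j i) a i) <= 1).
    { intros a _. unfold mscal, Emat. destruct (andb _ _); rewrite ?Rmult_1_r, ?Rmult_0_r, ?Rabs_R0; lra. }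
    pose proof (Lrisk_smooth k d S Hk W (mscal u (Emat j i)) s) as Hsm.
    assert (L1 : Lrisk k d S W <= Lrisk k d S (mplus W (mscal u (Emat j i)) s)).
    { apply Hmin. apply supp_mplus; auto. intros a b Hb. apply Hcol. intros ->. contradiction. }
    assert (L2 := Hsm (fun e He => proj1 (col_bv k d S Hk HS _ i Hi Hcol Hb1 e He)) ltac:(lra)).
    lra. }
  assert (A1 := Hgen 1 ltac:(rewrite Rabs_R1; lra)).
  assert (A2 := Hgen (-1) ltac:(unfold Rabs; destruct Rcase_abs; lra)).
  lra.
Qed.

Variables (eps c : R) (r : nat) (Wstar : mat).
Hypothesis Hc : 0 < c.
Hypothesis HWbound : forall j i, (j < k)%nat -> (i < d)%nat -> -c <= Wstar j i <= c.
Hypothesis HWsparse : norm_inf0 k d Wstar = r.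

Lemma step W G rs t :
  is_gradient k d (Lrisk k d S) W G -> supported_on rs t W ->
  (forall j i, (j < k)%nat -> (i < d)%nat -> in_I rs t i -> G j i = 0) ->
  (rs (Datatypes.S t) < d)%nat ->
  (forall r', (r' < d)%nat -> col_l1 k G r' <= col_l1 k G (rs (Datatypes.S t))) ->
  let M := col_l1 k G (rs (Datatypes.S t)) in
  (exists V, supported_on rs (Datatypes.S t) V /\ Lrisk k d S V <= Lrisk k d S W - M ^ 2 / 4) /\
  Lrisk k d S W - Lrisk k d S Wstar <= INR r * c * M /\ 0 <= M.
Proof.
  intros HG Hsup HGz Hrr Hmax M.
  set (rr := rs (Datatypes.S t)) in *.
  assert (HM0 : 0 <= M). { unfold M, col_l1. rewrite sumR_sumL. apply sumL_nonneg. intros; apply Rabs_pos. }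
  assert (Hdec : forall W' : mat, dir k d S W W' =
     sumL (seq 0 d) (fun i => sumL (seq 0 k) (fun j => W' j i * G j i))).
  { intros W'. rewrite (dir_decomp k d S Hk HS). apply sumL_ext. intros i Hi. apply sumL_ext. intros j Hj.
    apply in_seq in Hi. apply in_seq in Hj. rewrite (grad_id k d S Hk W G HG j i); auto; lia. }
  split; [|split; auto].
  - set (D := fun a b => if Nat.eqb b rr then (if Nat.ltb a k then (if Rle_dec 0 (G a rr) then -1 else 1) else 0) else 0).
    assert (Hcol : forall a b, b <> rr -> D a b = 0).
    { intros a b Hb. unfold D. assert (E : Nat.eqb b rr = false) by (apply Nat.eqb_neq; auto). rewrite E; auto. }
    assert (Hb1 : forall a, (a < k)%nat -> Rabs (D a rr) <= 1).
    { intros a _. unfold D. rewrite Nat.eqb_refl. destruct (Nat.ltb a k); [destruct (Rle_dec _ _)|];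
      unfold Rabs; destruct Rcase_abs; lra. }
    assert (Hdir : dir k d S W D = - M).
    { rewrite Hdec. rewrite (sumL_single _ _ rr). unfold M, col_l1. rewrite sumR_sumL.
      transitivity (sumL (seq 0 k) (fun j => -1 * Rabs (G j rr))); [|rewrite sumL_scal; ring].
      apply sumL_ext. intros j Hj. apply in_seq in Hj. unfold D. rewrite Nat.eqb_refl.
      assert (E : Nat.ltb j k = true) by (apply Nat.ltb_lt; lia). rewrite E.
      destruct (Rle_dec 0 (G j rr)). rewrite Rabs_right; lra. rewrite Rabs_left; lra.
      apply seq_NoDup. apply in_seq; lia.
      intros x _ Hx. apply sumL_zero. intros j _. rewrite Hcol; auto. ring. }
    assert (HM2 : M <= 2).
    { pose proof (dir_bound k d S Hk W D 2 (fun e He => proj2 (col_bv k d S Hk HS D rr Hrr Hcol Hb1 e He)) ltac:(lra)).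
      rewrite Hdir, Rabs_Ropp, Rabs_right in H; lra. }
    exists (mplus W D (M / 2)). split.
    + apply supp_mplus. intros a b Hb. apply Hsup. intros HI; apply Hb, in_I_mono; auto.
      intros a b Hb. apply Hcol. intros ->. apply Hb, in_I_last.
    + pose proof (Lrisk_smooth k d S Hk W D (M / 2)
        (fun e He => proj1 (col_bv k d S Hk HS D rr Hrr Hcol Hb1 e He)) ltac:(lra)).
      rewrite Hdir in H. lra.
  - set (Dst := fun a b => Wstar a b - W a b).
    assert (E1 : mplus W Dst 1 = Wstar).
    { apply functional_extensionality; intro a; apply functional_extensionality; intro b. unfold mplus, Dst; ring. }
    pose proof (Lrisk_convex k d S Hk W Dst) as Hcv. rewrite E1 in Hcv.
    assert (Hb : - dir k d S W Dst <= INR r * c * M).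
    { rewrite Hdec. rewrite <- HWsparse. unfold norm_inf0.
      replace (INR (length (filter (col_nonzero k Wstar) (seq 0 d))) * c * M) with
        (sumL (seq 0 d) (fun i => if col_nonzero k Wstar i then c * M else 0)) by (rewrite sumL_count; ring).
      replace (- sumL (seq 0 d) (fun i => sumL (seq 0 k) (fun j => Dst j i * G j i))) with
        (sumL (seq 0 d) (fun i => -1 * sumL (seq 0 k) (fun j => Dst j i * G j i))) by (rewrite sumL_scal; ring).
      apply sumL_le. intros i Hi. apply in_seq in Hi. assert (Hi' : (i < d)%nat) by lia. clear Hi. rename Hi' into Hi.
      assert (Hterm : sumL (seq 0 k) (fun j => Dst j i * G j i) = sumL (seq 0 k) (fun j => Wstar j i * G j i)).
      { apply sumL_ext. intros j Hj. apply in_seq in Hj. unfold Dst.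
        destruct (classic (in_I rs t i)) as [HI|HI].
        - rewrite HGz; auto; try lia. ring.
        - rewrite (Hsup j i HI). ring. }
      rewrite Hterm.
      destruct (col_nonzero k Wstar i) eqn:Ec.
      + assert (Rabs (sumL (seq 0 k) (fun j => Wstar j i * G j i)) <= c * M).
        { eapply Rle_trans. apply sumL_abs.
          apply Rle_trans with (sumL (seq 0 k) (fun j => c * Rabs (G j i))).
          apply sumL_le. intros j Hj. apply in_seq in Hj. rewrite Rabs_mult.
          specialize (HWbound j i ltac:(lia) Hi). assert (Rabs (Wstar j i) <= c) by (apply Rabs_le; lra).
          pose proof (Rabs_pos (G j i)). nra.
          rewrite sumL_scal. apply Rmult_le_compat_l. lra. specialize (Hmax i Hi). unfold col_l1 in Hmax.
          rewrite sumR_sumL in Hmax. exact Hmax. }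
        apply Rabs_le_between in H. lra.
      + rewrite sumL_zero. lra. intros j Hj. apply in_seq in Hj. rewrite (col_zero k Wstar i Ec j); [ring|lia]. }
    lra.
Qed.
End Main.

Lemma quad_base A x : 0 < A -> x - x ^ 2 / A <= A / 4.
Proof. intros HA. assert (0 <= (x - A/2)^2 / A) by (apply Rdiv_le_0_compat; [apply pow2_ge_0|lra]).
  replace (A/4) with (x - x^2/A + (x - A/2)^2/A) by (field; lra). lra. Qed.

Lemma quad_step A x T' : 0 < A -> 1 <= T' -> 0 <= x <= A / T' -> x - x ^ 2 / A <= A / (T' + 1).
Proof.
  intros HA HT [Hx0 Hx1]. set (y := A / T') in *.
  assert (Ay : A = y * T') by (unfold y; field; lra).
  assert (Hy : 0 < y) by (unfold y; apply Rdiv_lt_0_compat; lra).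
  assert (HP : 0 <= (T'+1) * x^2 - (T'+1) * A * x + A^2).
  { rewrite Ay. destruct (Rle_dec 2 T').
    - assert (E : (T'+1) * x^2 - (T'+1) * (y*T') * x + (y*T')^2 = (T'+1) * (y - x) * (y*T' - y - x) + y^2) by ring.
      rewrite E. assert (0 <= y * T' - y - x) by nra. assert (0 <= (T'+1)*(y-x)) by nra. nra.
    - assert (E : (T'+1) * x^2 - (T'+1) * (y*T') * x + (y*T')^2 =
                  (T'+1) * (x - y*T'/2)^2 + (y*T')^2 * (1 - (T'+1)/4)) by field.
      rewrite E. assert (0 <= (y*T')^2 * (1 - (T'+1)/4)) by (apply Rmult_le_pos; [apply pow2_ge_0|lra]).
      assert (0 <= (T'+1) * (x - y*T'/2)^2) by (apply Rmult_le_pos; [lra|apply pow2_ge_0]). lra. }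
  assert (E : A / (T'+1) - (x - x^2/A) = ((T'+1) * x^2 - (T'+1) * A * x + A^2) / (A * (T'+1))) by (field; lra).
  assert (0 <= ((T'+1) * x^2 - (T'+1) * A * x + A^2) / (A * (T'+1))) by (apply Rdiv_le_0_compat; nra).
  lra.
Qed.

Lemma recur (delta : nat -> R) A T : 0 < A ->
  (forall t, (1 <= t <= T)%nat -> delta t <= delta (t - 1)%nat /\
      (0 <= delta (t - 1)%nat -> delta t <= delta (t - 1)%nat - delta (t - 1)%nat ^ 2 / A)) ->
  forall t, (1 <= t <= T)%nat -> delta t <= A / INR t.
Proof.
  intros HA H. induction t as [|t IH]; intros Ht. lia.
  destruct (H (Datatypes.S t) Ht) as [H1 H2]. replace (Datatypes.S t - 1)%nat with t in H1, H2 by lia.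
  destruct (Rle_dec 0 (delta t)) as [Hp|Hn].
  - specialize (H2 Hp). destruct t as [|t].
    + pose proof (quad_base A (delta 0%nat) HA). simpl INR. replace (A / 1) with A by field. lra.
    + assert (Hb := IH ltac:(lia)).
      pose proof (quad_step A (delta (Datatypes.S t)) (INR (Datatypes.S t)) HA) as Q.
      rewrite (S_INR (Datatypes.S t)).
      assert (1 <= INR (Datatypes.S t)) by (rewrite S_INR; pose proof (pos_INR t); lra).
      specialize (Q H0 (conj Hp Hb)). lra.
  - assert (0 <= A / INR (Datatypes.S t)) by (apply Rdiv_le_0_compat; [lra| apply lt_0_INR; lia]). lra.
Qed.

Lemma ceil_nat_ge x : 0 <= x -> x <= INR (ceil_nat x).
Proof.
  intros Hx. unfold ceil_nat. destruct (base_Int_part (- x)) as [H1 H2].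
  rewrite INR_IZR_INZ, Z2Nat.id. rewrite opp_IZR. lra.
  apply le_IZR. rewrite opp_IZR. lra.
Qed.

Lemma filter_nil_all {A} (f : A -> bool) l : (forall x, In x l -> f x = false) -> filter f l = nil.
Proof. induction l; intros H; simpl; auto. rewrite H by (left; auto). apply IHl; intros; apply H; right; auto. Qed.

Theorem corollary1 (k d : nat) (S : list example) (eps c : R) (r : nat)
  (HS : forall e, In e S ->
          (snd e < k)%nat /\
          forall i, (i < d)%nat -> -1 <= fst e i <= 1)
  (Heps : 0 < eps) (Hc : 0 < c)
  (Wstar : mat)
  (HWloss : Lrisk k d S Wstar <= eps)
  (HWbound : forall j i, (j < k)%nat -> (i < d)%nat -> -c <= Wstar j i <= c)
  (HWsparse : norm_inf0 k d Wstar = r)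
  (Ws : nat -> mat) (rs : nat -> nat)
  (Hrun : shareboost_run k d S
            (ceil_nat (4 * INR r ^ 2 * c ^ 2 / eps)) Ws rs) :
  let T := ceil_nat (4 * INR r ^ 2 * c ^ 2 / eps) in
  Lrisk k d S (Ws T) <= 2 * eps /\ (norm_inf0 k d (Ws T) <= T)%nat.
Proof.
  intros T. change (ceil_nat _) with T in Hrun. destruct Hrun as [H0 Hst].
  split.
  2:{ unfold norm_inf0. destruct (Nat.eq_dec T 0) as [HT0|HT0].
      - rewrite HT0. rewrite filter_nil_all. simpl; lia.
        intros i _. unfold col_nonzero. destruct existsb eqn:E; auto.
        apply existsb_exists in E. destruct E as [j [_ Hj]]. rewrite H0 in Hj.
        destruct (Req_EM_T 0 0); congruence.
      - destruct (Hst T ltac:(lia) ltac:(lia)) as [_ [_ [Hsupp _]]].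
        replace T with (length (map rs (seq 1 T))) at 2 by (rewrite length_map, length_seq; auto).
        apply NoDup_incl_length. apply NoDup_filter, seq_NoDup.
        intros i Hi. apply filter_In in Hi. destruct Hi as [_ Hi].
        unfold col_nonzero in Hi. apply existsb_exists in Hi. destruct Hi as [j [_ Hj]].
        destruct (classic (in_I rs T i)) as [[s [Hs1 [Hs2 Hs3]]]|HI].
        + rewrite <- Hs3. apply in_map, in_seq. lia.
        + rewrite (Hsupp j i HI) in Hj. destruct (Req_EM_T 0 0); congruence. }
  destruct S as [|e0 S0] eqn:HSeq.
  { rewrite Lrisk_def. simpl. unfold sumL; simpl. lra. }
  rewrite <- HSeq in *.
  assert (Hk : (0 < k)%nat). { destruct (HS e0) as [H _]. rewrite HSeq; left; auto. lia. }
  assert (Hfacts : forall t', (Datatypes.S t' <= T)%nat -> exists M, 0 <= M /\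
     Lrisk k d S (Ws (Datatypes.S t')) <= Lrisk k d S (Ws t') - M ^ 2 / 4 /\
     Lrisk k d S (Ws t') - Lrisk k d S Wstar <= INR r * c * M).
  { intros t' Ht. destruct (Hst (Datatypes.S t') ltac:(lia) Ht) as [Hrr [[G [HG Hmax]] [Hsupp Hmin]]].
    replace (Datatypes.S t' - 1)%nat with t' in HG by lia.
    assert (Hsup' : supported_on rs t' (Ws t')).
    { destruct t' as [|t'']. intros j i _; apply H0.
      destruct (Hst (Datatypes.S t'') ltac:(lia) ltac:(lia)) as [_ [_ [Hs _]]]. exact Hs. }
    assert (HGz : forall j i, (j < k)%nat -> (i < d)%nat -> in_I rs t' i -> G j i = 0).
    { destruct t' as [|t''].
      - intros j i _ _ HI. exfalso. apply (in_I_0 rs i HI).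
      - destruct (Hst (Datatypes.S t'') ltac:(lia) ltac:(lia)) as [_ [_ [_ Hm]]].
        apply (grad_zero k d S Hk HS (Ws (Datatypes.S t'')) G rs (Datatypes.S t'') HG Hsup' Hm). }
    destruct (step k d S Hk HS c r Wstar Hc HWbound HWsparse (Ws t') G rs t' HG Hsup' HGz Hrr Hmax)
      as [[V [HV HVl]] [Hii HM]].
    eexists; split; [exact HM|]. split; [|exact Hii].
    pose proof (Hmin V HV). lra. }
  destruct (Nat.eq_dec r 0) as [Hr0|Hr0].
  - destruct (Nat.eq_dec T 0) as [HT0|HT0].
    + rewrite HT0. rewrite (Lrisk_block k d S Hk HS (Ws 0%nat) Wstar). lra.
      intros a b Ha Hb. rewrite H0. symmetry. apply (col_zero k Wstar b); auto.
      apply (filter_len0 _ (seq 0 d)). pose proof HWsparse as Hw; rewrite Hr0 in Hw; exact Hw. apply in_seq; lia.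
    + destruct (Hfacts (T - 1)%nat ltac:(lia)) as [M [HM [H1 H2]]].
      replace (Datatypes.S (T - 1)) with T in H1 by lia.
      rewrite Hr0 in H2. simpl INR in H2. assert (0 <= M ^ 2 / 4) by (apply Rdiv_le_0_compat; [apply pow2_ge_0|lra]).
      lra.
  - set (A := 4 * INR r ^ 2 * c ^ 2).
    assert (Hr1 : 1 <= INR r) by (apply (le_INR 1); lia).
    assert (HA : 0 < A) by (unfold A; assert (0 < INR r ^ 2 * c^2) by (apply Rmult_lt_0_compat; apply pow_lt; lra); lra).
    assert (HTge : A / eps <= INR T) by (apply ceil_nat_ge; apply Rdiv_le_0_compat; lra).
    assert (HT1 : (1 <= T)%nat).
    { destruct (Nat.eq_dec T 0) as [E|E]; [|lia]. rewrite E in HTge. simpl in HTge.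
      assert (0 < A / eps) by (apply Rdiv_lt_0_compat; lra). lra. }
    pose (delta := fun t => Lrisk k d S (Ws t) - Lrisk k d S Wstar).
    assert (Hrec := recur delta A T HA).
    assert (HT : delta T <= A / INR T).
    { apply Hrec; [|lia]. intros t Ht.
      destruct (Hfacts (t - 1)%nat ltac:(lia)) as [M [HM [H1 H2]]].
      replace (Datatypes.S (t - 1)) with t in H1 by lia.
      unfold delta; cbv beta. split.
      - assert (0 <= M ^ 2 / 4) by (apply Rdiv_le_0_compat; [apply pow2_ge_0|lra]). lra.
      - intros Hp. set (x := Lrisk k d S (Ws (t - 1)%nat) - Lrisk k d S Wstar) in *.
        assert (x ^ 2 <= (INR r * c * M) ^ 2) by (apply pow_incr; lra).
        assert (E : (INR r * c * M) ^ 2 / A = M ^ 2 / 4) by (unfold A; field; lra).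
        assert (x ^ 2 / A <= (INR r * c * M) ^ 2 / A) by (apply Rmult_le_compat_r; [left; apply Rinv_0_lt_compat; lra| lra]).
        assert (Hx : x = Lrisk k d S (Ws (t - 1)%nat) - Lrisk k d S Wstar) by reflexivity. lra. }
    assert (HTpos : 0 < INR T) by (apply lt_0_INR; lia).
    assert (A / INR T <= eps).
    { apply (Rmult_le_reg_r (INR T)); auto. unfold Rdiv. rewrite Rmult_assoc, Rinv_l by lra.
      apply (Rmult_le_reg_r (/ eps)). apply Rinv_0_lt_compat; lra.
      replace (eps * INR T * / eps) with (INR T) by (field; lra). lra. }
    unfold delta in HT. lra.
Qed.
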